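(* Let $X$ and $\Lambda$ be nonempty sets, $f: X\to\mathbb{R}$ a function and $(f_\lambda)_{\lambda\in\Lambda}$ a family of real-valued functions on $X$ such that the family $(f_\lambda-f)_{\lambda\in\Lambda}$ is infsup-convex on $X$. Assume that $(f_\lambda(x))_{\lambda\in\Lambda}\in\ell^\infty(\Lambda)$ for every $x\in X$, and that $f(x)\le\sup_{\lambda\in\Lambda}f_\lambda(x)$ for every $x\in X$. Then there exists $\Phi\in\Delta_\Lambda$ such that $f(x)\le\Phi((f_\lambda(x))_{\lambda\in\Lambda})$ for every $x\in X$.
   Context: For a nonempty set $\Lambda$, $\ell^\infty(\Lambda)$ is the real Banach space of bounded real-valued functions on $\Lambda$ (sup-norm), $\ell^\infty(\Lambda)^*$ its topological dual, and $\Delta_\Lambda:=\{\Phi\in\ell^\infty(\Lambda)^*:\ \Phi(\varphi)\le\sup_{\lambda\in\Lambda}\varphi(\lambda)\ \forall\varphi\in\ell^\infty(\Lambda)\}$. Let $\Delta_m:=\{(t_1,\dots,t_m)\in\mathbb{R}^m: t_j\ge0,\ \sum_j t_j=1\}$. A family $(g_\lambda)_{\lambda\in\Lambda}$ of real-valued functions on a nonempty set $X$ is infsup-convex on $X$ if for all $m\ge1$, $\mathbf{t}\in\Delta_m$ and $x_1,\dots,x_m\in X$: $\inf_{x\in X}\sup_{\lambda\in\Lambda}g_\lambda(x)\le\sup_{\lambda\in\Lambda}\sum_{j=1}^m t_j g_\lambda(x_j)$. *)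

(* Defs.v *)
From HB Require Import structures.
From mathcomp Require Import all_boot all_order all_algebra.
From mathcomp Require Import all_classical all_reals.
From mathcomp Require Import ereal.
Set Implicit Arguments. Unset Strict Implicit. Unset Printing Implicit Defensive.
Import Order.TTheory GRing.Theory Num.Theory.
Local Open Scope classical_set_scope.
Local Open Scope ring_scope.

Definition linf_mem (R : realType) (Lam : Type) (phi : Lam -> R) : Prop :=
  exists M : R, forall l, `|phi l| <= M.

Definition linf_norm (R : realType) (Lam : Type) (phi : Lam -> R) : R :=
  sup (range (fun l => `|phi l|)).

(* Phi (only its values on l^oo(Lam) matter) is an element of the
   topological dual l^oo(Lam)^*: linear and bounded w.r.t. the sup-norm *)
Definition linf_dual (R : realType) (Lam : Type) (Phi : (Lam -> R) -> R) : Prop :=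
  (forall phi psi, linf_mem phi -> linf_mem psi ->
     Phi (fun l => phi l + psi l) = Phi phi + Phi psi) /\
  (forall (a : R) phi, linf_mem phi -> Phi (fun l => a * phi l) = a * Phi phi) /\
  (exists C : R, forall phi, linf_mem phi -> `|Phi phi| <= C * linf_norm phi).

Definition Delta_Lam (R : realType) (Lam : Type) (Phi : (Lam -> R) -> R) : Prop :=
  linf_dual Phi /\ forall phi, linf_mem phi -> Phi phi <= sup (range phi).

Definition infsup_convex (R : realType) (X Lam : Type) (g : Lam -> X -> R) : Prop :=
  forall (m : nat) (t : 'I_m -> R) (xs : 'I_m -> X),
    (0 < m)%N -> (forall j, 0 <= t j) -> \sum_(j < m) t j = 1 ->
    (ereal_inf (range (fun x => ereal_sup (range (fun l => (g l x)%:E)))) <=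
     ereal_sup (range (fun l => (\sum_(j < m) t j * g l (xs j))%:E)))%E.

(* Main.v *)
Require Import Defs.
From HB Require Import structures.
From mathcomp Require Import all_boot all_order all_algebra.
From mathcomp Require Import all_classical all_reals.
From mathcomp Require Import ereal.
From mathcomp Require Import ring lra.
Set Implicit Arguments. Unset Strict Implicit. Unset Printing Implicit Defensive.
Import Order.TTheory GRing.Theory Num.Theory.
Local Open Scope classical_set_scope.
Local Open Scope ring_scope.

Definition vadd (R : realType) (Lam : Type) (f g : Lam -> R) := fun l => f l + g l.
Definition vsc (R : realType) (Lam : Type) (a : R) (f : Lam -> R) := fun l => a * f l.
Definition vzero (R : realType) (Lam : Type) : Lam -> R := fun _ => 0.
Arguments vzero {R Lam}.

Ltac vext := apply: funext => ?; rewrite /vadd /vsc /vzero /=; ring.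

Record graphP (R : realType) (Lam : Type) (B K : (Lam -> R) -> Prop)
  (p : (Lam -> R) -> R) (G : set ((Lam -> R) * R)) : Prop := {
  gB : forall f r, G (f, r) -> B f;
  gF : forall f r r', G (f, r) -> G (f, r') -> r = r';
  gD : forall f r g s, G (f, r) -> G (g, s) -> G (vadd f g, r + s);
  gZ : forall a f r, G (f, r) -> G (vsc a f, a * r);
  gK : forall f r k, G (f, r) -> K k -> r <= p (vadd f k) }.

Lemma chain_ok (R : realType) (Lam : Type) (B K : (Lam -> R) -> Prop)
  (p : (Lam -> R) -> R) (F : set (set ((Lam -> R) * R))) :
  F `<=` graphP B K p -> total_on F subset -> graphP B K p (\bigcup_(X in F) X).
Proof.
move=> FP tot; split.
- by move=> f r [X FX Xz]; exact: (gB (FP X FX) Xz).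
- move=> f r r' [X FX Xz] [Y FY Yz].
  case: (tot X Y FX FY) => [XY|YX].
  + exact: (gF (FP Y FY) (XY _ Xz) Yz).
  + exact: (gF (FP X FX) Xz (YX _ Yz)).
- move=> f r g s [X FX Xz] [Y FY Yz].
  case: (tot X Y FX FY) => [XY|YX].
  + by exists Y => //; exact: (gD (FP Y FY) (XY _ Xz) Yz).
  + by exists X => //; exact: (gD (FP X FX) Xz (YX _ Yz)).
- by move=> a f r [X FX Xz]; exists X => //; exact: (gZ (FP X FX) a Xz).
- by move=> f r k [X FX Xz]; exact: (gK (FP X FX) Xz).
Qed.

Lemma HBthm (R : realType) (Lam : Type) (B K : (Lam -> R) -> Prop)
  (p : (Lam -> R) -> R)
  (B0 : B vzero) (BD : forall f g, B f -> B g -> B (vadd f g))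
  (BZ : forall a f, B f -> B (vsc a f))
  (KB : forall k, K k -> B k) (K0 : K vzero)
  (KD : forall k k', K k -> K k' -> K (vadd k k'))
  (KZ : forall a k, 0 <= a -> K k -> K (vsc a k))
  (pD : forall f g, B f -> B g -> p (vadd f g) <= p f + p g)
  (pZ : forall a f, 0 < a -> B f -> p (vsc a f) = a * p f)
  (Kpos : forall k, K k -> 0 <= p k) :
  exists Phi : (Lam -> R) -> R,
    (forall f g, B f -> B g -> Phi (vadd f g) = Phi f + Phi g) /\
    (forall a f, B f -> Phi (vsc a f) = a * Phi f) /\
    (forall f k, B f -> K k -> Phi f <= p (vadd f k)).
Proof.
have [A [PA Amax]] := Zorn_bigcup (@chain_ok R Lam B K p).
have A00 : A (vzero, 0).
  case: (pselect (exists z, A z)) => [[[f r] Afr]|nA].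
    have := gZ PA 0 Afr; rewrite mul0r.
    by have -> : vsc 0 f = vzero by vext.
  exfalso; apply: (Amax [set (vzero, 0)]).
    split; first by move=> z Az; exfalso; apply: nA; exists z.
    by move=> /(_ (vzero, 0) erefl) ?; apply: nA; exists (vzero, 0).
  split.
  - by move=> f r [-> _].
  - by move=> f r r' [_ ->] [_ ->].
  - move=> f r g s [-> ->] [-> ->]; rewrite addr0; congr (_, _); vext.
  - move=> a f r [-> ->]; rewrite mulr0; congr (_, _); vext.
  - move=> f r k [-> ->] Kk; have -> : vadd vzero k = k by vext.
    exact: Kpos.
have Adom : forall y, B y -> exists r, A (y, r).
  move=> y By; apply: contrapT => ny.
  have Ay : forall r, ~ A (y, r) by move=> r Ayr; apply: ny; exists r.
  pose S := [set z | exists u g k, [/\ A (u, g), K k &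
                 z = g - p (vadd (vadd u (vsc (-1) y)) k)]].
  have S0 : S !=set0.
    exists (0 - p (vadd (vadd vzero (vsc (-1) y)) vzero)).
    by exists vzero, 0, vzero.
  have Sub : has_ubound S.
    exists (p y) => _ [u [g [k [Aug Kk ->]]]].
    have Bu := gB PA Aug.
    have B1 := BD _ _ (BD _ _ Bu (BZ (-1) _ By)) (KB _ Kk).
    have := pD _ _ B1 By.
    have -> : vadd (vadd (vadd u (vsc (-1) y)) k) y = vadd u k by vext.
    have := gK PA Aug Kk; lra.
  pose c := sup S.
  have cub : forall t g k, A (t, g) -> K k -> c <= p (vadd (vadd t y) k) - g.
    move=> t g k Atg Kk; apply: ge_sup => // _ [u [h [k1 [Auh Kk1 ->]]]].
    have Bu := gB PA Auh; have Bt := gB PA Atg.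
    have := gK PA (gD PA Auh Atg) (KD _ _ Kk1 Kk).
    have B1 := BD _ _ (BD _ _ Bu (BZ (-1) _ By)) (KB _ Kk1).
    have B2 := BD _ _ (BD _ _ Bt By) (KB _ Kk).
    have := pD _ _ B1 B2.
    have -> : vadd (vadd (vadd u (vsc (-1) y)) k1) (vadd (vadd t y) k) =
              vadd (vadd u t) (vadd k1 k) by vext.
    lra.
  have clb : forall u g k, A (u, g) -> K k -> g - p (vadd (vadd u (vsc (-1) y)) k) <= c.
    by move=> u g k Aug Kk; apply: ub_le_sup => //; exists u, g, k.
  pose A' := [set z : (Lam -> R) * R | exists s g a,
                [/\ A (s, g), z.1 = vadd s (vsc a y) & z.2 = g + a * c]].
  apply: (Amax A'); last first.
  split.
  - by move=> f r [s [g [a [Asg /= -> _]]]]; exact: BD _ _ (gB PA Asg) (BZ a _ By).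
  - move=> f r r' [s [g [a [Asg /= Ef ->]]]] [s' [g' [a' [Asg' /= Ef' ->]]]].
    have E := etrans (esym Ef) Ef'.
    case: (eqVneq a a') => [eaa|naa].
      subst a'.
      have ss : s = s'.
        apply: funext => l; have := congr1 (fun h => h l) E; rewrite /vadd /vsc /=; lra.
      by subst s'; rewrite (gF PA Asg Asg').
    exfalso.
    have HA := gZ PA (a - a')^-1 (gD PA Asg' (gZ PA (-1) Asg)).
    have d0 : a - a' != 0 by rewrite subr_eq0.
    have Ey : vsc (a - a')^-1 (vadd s' (vsc (-1) s)) = y.
      apply: funext => l; have := congr1 (fun h => h l) E; rewrite /vadd /vsc /= => El.
      have -> : s' l + -1 * s l = (a - a') * y l by lra.
      by rewrite mulrA mulVf // mul1r.
    by rewrite Ey in HA; exact: Ay HA.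
  - move=> f r f' r' [s [g [a [Asg /= -> ->]]]] [s' [g' [a' [Asg' /= -> ->]]]].
    exists (vadd s s'), (g + g'), (a + a'); split => /=.
    + have := gD PA Asg Asg'. exact.
    + vext.
    + ring.
  - move=> b f r [s [g [a [Asg /= -> ->]]]].
    exists (vsc b s), (b * g), (b * a); split => /=.
    + have := gZ PA b Asg. exact.
    + vext.
    + ring.
  - move=> f r k [s [g [a [Asg /= -> ->]]]] Kk.
    have Bs := gB PA Asg; have Bk := KB _ Kk.
    case: (ltgtP a 0) => [a0|a0|a0].
    + pose b := - a.
      have b0 : 0 < b by rewrite /b oppr_gt0.
      have bi0 : 0 <= b^-1 by rewrite invr_ge0 ltW.
      have := clb _ _ _ (gZ PA b^-1 Asg) (KZ _ _ bi0 Kk).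
      set Q := p _ => HQ.
      have -> : vadd (vadd s (vsc a y)) k =
                vsc b (vadd (vadd (vsc b^-1 s) (vsc (-1) y)) (vsc b^-1 k)).
        apply: funext => l; rewrite /vadd /vsc !mulrDr !mulrA mulfV ?gt_eqF // !mul1r /b.
        ring.
      rewrite pZ //; last exact: BD _ _ (BD _ _ (BZ _ _ Bs) (BZ _ _ By)) (BZ _ _ Bk).
      have := ler_wpM2l (ltW b0) HQ.
      have ab : a = - b by rewrite /b opprK.
      rewrite mulrBr mulrA mulfV ?gt_eqF // mul1r ab mulNr -/Q; lra.
    + have ai0 : 0 <= a^-1 by rewrite invr_ge0 ltW.
      have := cub _ _ _ (gZ PA a^-1 Asg) (KZ _ _ ai0 Kk).
      set Q := p _ => HQ.
      have -> : vadd (vadd s (vsc a y)) k =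
                vsc a (vadd (vadd (vsc a^-1 s) y) (vsc a^-1 k)).
        apply: funext => l; rewrite /vadd /vsc !mulrDr !mulrA mulfV ?gt_eqF // !mul1r.
        done.
      rewrite pZ //; last exact: BD _ _ (BD _ _ (BZ _ _ Bs) By) (BZ _ _ Bk).
      have := ler_wpM2l (ltW a0) HQ.
      rewrite mulrBr mulrA mulfV ?gt_eqF // mul1r -/Q; lra.
    + rewrite a0 mul0r addr0.
      have -> : vadd (vadd s (vsc 0 y)) k = vadd s k by vext.
      have := gK PA Asg Kk. exact.
  split.
    move=> [f r] Afr; exists f, r, 0; split => //=; last by rewrite mul0r addr0.
    vext.
  move=> /(_ (y, c)) H; apply: (Ay c); apply: H.
  exists vzero, 0, 1; split => //=; [vext | ring].
pose Phi f := match pselect (exists r, A (f, r)) with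
                left h => sval (cid h) | right _ => 0 end.
have PhiA : forall f, B f -> A (f, Phi f).
  move=> f Bf; rewrite /Phi; case: pselect => [h|h].
    exact: (svalP (cid h)).
  by exfalso; exact: h (Adom f Bf).
exists Phi; split; [|split].
- move=> f g Bf Bg; apply: (gF PA (PhiA _ (BD _ _ Bf Bg))).
  have := gD PA (PhiA _ Bf) (PhiA _ Bg); exact.
- move=> a f Bf; apply: (gF PA (PhiA _ (BZ a _ Bf))); have := gZ PA a (PhiA _ Bf); exact.
- move=> f k Bf Kk; have := gK PA (PhiA _ Bf) Kk; exact.
Qed.

Lemma p_ub (R : realType) (Lam : Type) (phi : Lam -> R) :
  linf_mem phi -> forall l, phi l <= sup (range phi).
Proof.
move=> [M hM] l; apply: ub_le_sup; last by exists l.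
exists M => _ [l' _ <-]; exact: le_trans (ler_norm _) (hM l').
Qed.

Lemma p_le (R : realType) (Lam : Type) (phi : Lam -> R) (M : R) :
  inhabited Lam -> (forall l, phi l <= M) -> sup (range phi) <= M.
Proof.
move=> [l0] hM; apply: ge_sup; first by exists (phi l0), l0.
by move=> _ [l _ <-].
Qed.

Lemma B0 (R : realType) (Lam : Type) : linf_mem (@vzero R Lam).
Proof. by exists 0 => l; rewrite /vzero normr0. Qed.

Lemma BD (R : realType) (Lam : Type) (f g : Lam -> R) :
  linf_mem f -> linf_mem g -> linf_mem (vadd f g).
Proof.
move=> [M hM] [N hN]; exists (M + N) => l.
exact: le_trans (ler_normD _ _) (lerD (hM l) (hN l)).
Qed.

Lemma BZ (R : realType) (Lam : Type) (a : R) (f : Lam -> R) :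
  linf_mem f -> linf_mem (vsc a f).
Proof.
move=> [M hM]; exists (`|a| * M) => l; rewrite /vsc normrM.
by apply: ler_wpM2l => //; exact: hM.
Qed.

Lemma pD (R : realType) (Lam : Type) (hL : inhabited Lam) (f g : Lam -> R) :
  linf_mem f -> linf_mem g ->
  sup (range (vadd f g)) <= sup (range f) + sup (range g).
Proof.
move=> Bf Bg; apply: p_le => // l; rewrite /vadd.
exact: lerD (p_ub Bf l) (p_ub Bg l).
Qed.

Lemma pZ (R : realType) (Lam : Type) (hL : inhabited Lam) (a : R) (f : Lam -> R) :
  0 < a -> linf_mem f -> sup (range (vsc a f)) = a * sup (range f).
Proof.
move=> a0 Bf; apply/eqP; rewrite eq_le; apply/andP; split.
  apply: p_le => // l; rewrite /vsc; apply: ler_wpM2l; [exact: ltW | exact: p_ub].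
rewrite -ler_pdivlMl //; apply: p_le => // l.
rewrite ler_pdivlMl //; exact: (p_ub (BZ a Bf) l).
Qed.

Lemma hub (R : realType) (Lam : Type) (phi : Lam -> R) :
  linf_mem phi -> has_ubound (range phi).
Proof.
move=> [M hM]; exists M => _ [l' _ <-]; exact: le_trans (ler_norm _) (hM l').
Qed.

Theorem theorem3p1 (R : realType) (X Lam : Type)
  (hX : inhabited X) (hLam : inhabited Lam)
  (f : X -> R) (fl : Lam -> X -> R)
  (hconv : infsup_convex (fun l x => fl l x - f x))
  (hbdd : forall x, linf_mem (fun l => fl l x))
  (hle : forall x, f x <= sup (range (fun l => fl l x))) :
  exists Phi : (Lam -> R) -> R, Delta_Lam Phi /\
    forall x, f x <= Phi (fun l => fl l x).
Proof.
case: (hX) => x0.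
pose g l x := fl l x - f x.
pose one : Lam -> R := fun _ => 1.
have Bone : linf_mem one by exists 1 => l; rewrite /one normr1.
have Bg : forall x, linf_mem (fun l => g l x).
  move=> x; have -> : (fun l => g l x) = vadd (fun l => fl l x) (vsc (- f x) one).
    by apply: funext => l; rewrite /g /vadd /vsc /one mulr1.
  exact: BD (hbdd x) (BZ _ Bone).
pose Sk (ls : seq (R * X)) := fun l => \sum_(q <- ls) q.1 * g l q.2.
pose K k := exists ls, all (fun q => 0 <= q.1) ls /\ k = Sk ls.
have BS : forall ls, linf_mem (Sk ls).
  elim => [|q ls IH].
    have -> : Sk [::] = vzero by apply: funext => l; rewrite /Sk big_nil.
    exact: B0.
  have -> : Sk (q :: ls) = vadd (vsc q.1 (fun l => g l q.2)) (Sk ls).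
    by apply: funext => l; rewrite /Sk big_cons.
  exact: BD (BZ _ (Bg _)) IH.
have psup : forall x, 0 <= sup (range (fun l => g l x)).
  move=> x; have := hle x.
  have : sup (range (fun l => fl l x)) <= sup (range (fun l => g l x)) + f x.
    apply: p_le => // l; have := p_ub (Bg x) l; rewrite /g; lra.
  lra.
have Kpos : forall k, K k -> 0 <= sup (range k).
  case: (hLam) => l0.
  move=> k [ls [ls0 ->]].
  case: ls ls0 => [|q0 ls'] ls0.
    by have := p_ub (BS [::]) l0; rewrite /Sk big_nil.
  set ls := q0 :: ls' in ls0 *.
  pose d : R * X := (0, x0).
  pose s (j : 'I_(size ls)) := (nth d ls j).1.
  pose xs (j : 'I_(size ls)) := (nth d ls j).2.
  have Ek : forall l, Sk ls l = \sum_(j < size ls) s j * g l (xs j).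
    by move=> l; rewrite /Sk (big_nth d) big_mkord.
  have s0 : forall j, 0 <= s j.
    by move=> j; exact: (all_nthP d ls0 j (ltn_ord j)).
  pose S := \sum_(j < size ls) s j.
  have S0 : 0 <= S by apply: sumr_ge0 => j _.
  case: (eqVneq S 0) => [SS|SS].
    have := psumr_eq0P (fun j _ => s0 j) SS => sj.
    have := p_ub (BS ls) l0; rewrite Ek big1 // => j _.
    by rewrite sj // mul0r.
  have Sp : 0 < S by rewrite lt_def SS.
  pose t j := s j / S.
  have t0 : forall j, 0 <= t j by move=> j; apply: divr_ge0.
  have t1 : \sum_(j < size ls) t j = 1 by rewrite -mulr_suml mulfV.
  have := hconv (size ls) t xs (ltn0Sn _) t0 t1.
  have Bh := BZ S^-1 (BS ls).
  have lo : (0 <= ereal_inf (range (fun x => ereal_sup (range (fun l => (fl l x - f x)%:E)))))%E.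
    apply: le_ereal_inf_tmp => _ [x _ <-].
    have -> : range (fun l => (fl l x - f x)%:E) = EFin @` range (fun l => g l x).
      by rewrite image_comp.
    rewrite ereal_sup_EFin; first by rewrite lee_fin; exact: psup.
      exact: hub (Bg x).
    by exists (g l0 x), l0.
  have up : (ereal_sup (range (fun l => (\sum_(j < size ls) t j * (fl l (xs j) - f (xs j)))%:E))
             <= (sup (range (vsc S^-1 (Sk ls))))%:E)%E.
    apply: ge_ereal_sup => _ [l _ <-]; rewrite lee_fin.
    have -> : \sum_(j < size ls) t j * (fl l (xs j) - f (xs j)) = vsc S^-1 (Sk ls) l.
      rewrite /vsc Ek mulr_sumr; apply: eq_bigr => j _; rewrite /t /g; ring.
    exact: p_ub.
  move=> H; have := le_trans lo (le_trans H up); rewrite lee_fin.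
  by rewrite pZ // ?invr_gt0 // pmulr_rge0 // invr_gt0.
have := @HBthm R Lam (@linf_mem R Lam) K (fun phi => sup (range phi)) (B0 _ _)
  (@BD R Lam) (@BZ R Lam).
case.
- by move=> k [ls [_ ->]].
- by exists [::]; split => //; apply: funext => l; rewrite /Sk big_nil.
- move=> k k' [ls [ls0 ->]] [ls' [ls0' ->]]; exists (ls ++ ls'); split.
    by rewrite all_cat ls0 ls0'.
  by apply: funext => l; rewrite /Sk /vadd big_cat.
- move=> a k a0 [ls [ls0 ->]]; exists (map (fun q => (a * q.1, q.2)) ls); split.
    elim: ls ls0 => //= q ls IH /andP[h1 h2]; apply/andP; split.
      exact: mulr_ge0.
    exact: IH.
  apply: funext => l; rewrite /Sk /vsc big_map mulr_sumr.
  by apply: eq_bigr => q _ /=; rewrite mulrA.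
- exact: pD.
- exact: pZ.
- exact: Kpos.
move=> Phi [PhiD [PhiZ PhiK]].
have K0 : K vzero by exists [::]; split => //; apply: funext => l; rewrite /Sk big_nil.
have Phip : forall phi, linf_mem phi -> Phi phi <= sup (range phi).
  move=> phi Bphi; have := PhiK phi vzero Bphi K0.
  by have -> : vadd phi vzero = phi by apply: funext => l; rewrite /vadd /vzero addr0.
have PhiN : forall phi, linf_mem phi -> Phi (vsc (-1) phi) = - Phi phi.
  by move=> phi Bphi; rewrite PhiZ // mulN1r.
exists Phi; split.
  split; last exact: Phip.
  split; first by move=> phi psi Bp Bq; exact: (PhiD phi psi Bp Bq).
  split; first by move=> a phi Bp; exact: (PhiZ a phi Bp).
  exists 1 => phi Bphi; rewrite mul1r ler_norml.
  have Bn : linf_mem (fun l => `|phi l|).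
    by case: Bphi => M hM; exists M => l; rewrite normr_id.
  have nb : forall psi, (forall l, psi l <= `|phi l|) -> sup (range psi) <= linf_norm phi.
    move=> psi hpsi; apply: p_le => // l; apply: le_trans (hpsi l) _.
    exact: (p_ub Bn l).
  apply/andP; split.
    rewrite lerNl -PhiN //; apply: le_trans (Phip _ (BZ _ Bphi)) _.
    by apply: nb => l; rewrite /vsc mulN1r; rewrite -[X in _ <= X]normrN; exact: ler_norm. 
  apply: le_trans (Phip _ Bphi) _; apply: nb => l; exact: ler_norm.
move=> x.
pose Gx := fun l => g l x.
have KG : K Gx.
  exists [:: (1, x)]; split; first by rewrite /= ler01.
  by apply: funext => l; rewrite /Sk big_cons big_nil /= mul1r addr0.
have h1 := PhiK _ _ (BZ (-1) (Bg x)) KG.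
have : sup (range (vadd (vsc (-1) Gx) Gx)) <= 0.
  by apply: p_le => // l; rewrite /vadd /vsc /Gx; lra.
move=> h2; have PG : 0 <= Phi Gx.
  have := le_trans h1 h2; rewrite PhiN //; lra.
have P1 : Phi one = 1.
  have a1 : Phi one <= 1 by apply: le_trans (Phip _ Bone) _; apply: p_le => // l.
  have a2 : Phi (vsc (-1) one) <= -1.
    by apply: le_trans (Phip _ (BZ _ Bone)) _; apply: p_le => // l; rewrite /vsc /one mulr1.
  move: a2; rewrite PhiN //; lra.
have -> : (fun l => fl l x) = vadd Gx (vsc (f x) one).
  by apply: funext => l; rewrite /vadd /vsc /Gx /g /one; ring.
rewrite PhiD //; last exact: BZ.
rewrite PhiZ // P1; lra.
exact: Bg.
Qed.
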